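(* Let $R=\mathbb{C}[z_1,\dots,z_n]$. Let $f_1,\dots,f_P,g\in R$ be homogeneous polynomials of degree $m$ such that $\{f_1,\dots,f_P,g\}$ is linearly independent over $\mathbb{C}$, and let $I^+=\langle f_1,\dots,f_P\rangle$ and $I^-=\langle g\rangle$. If $I^-_{m+1}\subseteq I^+_{m+1}$, then $n\le 3$ implies $P\ge n$. Moreover, for every $n\ge 4$ there exist such $f_1,\dots,f_P,g$ (linearly independent, homogeneous of a common degree $m$) with $I^-_{m+1}\subseteq I^+_{m+1}$ and $P<n$.
   Context: For a homogeneous ideal $I\subseteq R$, $I_{d}$ denotes its homogeneous component of degree $d$, i.e. the $\mathbb{C}$-vector space of homogeneous polynomials of degree $d$ lying in $I$. *)

(* Defs.v *)
From HB Require Import structures.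
From mathcomp Require Import all_boot all_order all_algebra.
From mathcomp Require Import Rstruct.
From mathcomp Require Import complex.
From mathcomp Require Import mpoly.

Set Implicit Arguments. Unset Strict Implicit. Unset Printing Implicit Defensive.
Import Order.TTheory GRing.Theory Num.Theory.
Local Open Scope ring_scope.

Definition CC : Type := complex Rdefinitions.R.

Definition in_ideal (n P : nat) (f : 'I_P -> {mpoly CC[n]}) (p : {mpoly CC[n]}) : Prop :=
  exists q : 'I_P -> {mpoly CC[n]}, p = \sum_(i < P) q i * f i.

Definition in_ideal_deg (n P : nat) (f : 'I_P -> {mpoly CC[n]}) (d : nat)
  (p : {mpoly CC[n]}) : Prop :=
  p \is d.-homog /\ in_ideal f p.

Definition lin_indep_fg (n P : nat) (f : 'I_P -> {mpoly CC[n]}) (g : {mpoly CC[n]}) : Prop :=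
  forall (c : 'I_P -> CC) (c0 : CC),
    \sum_(i < P) c i *: f i + c0 *: g = 0 -> (forall i, c i = 0) /\ c0 = 0.

Definition good_config (n m P : nat) (f : 'I_P -> {mpoly CC[n]}) (g : {mpoly CC[n]}) : Prop :=
  [/\ (forall i, f i \is m.-homog), g \is m.-homog, lin_indep_fg f g &
      (forall p, in_ideal_deg (fun _ : 'I_1 => g) m.+1 p -> in_ideal_deg f m.+1 p)].

(* Main.v *)
Require Import Defs.
From HB Require Import structures.
From mathcomp Require Import all_boot all_order all_algebra.
From mathcomp Require Import Rstruct complex mpoly.
From mathcomp Require Import ring.
Set Implicit Arguments. Unset Strict Implicit. Unset Printing Implicit Defensive.
Import Order.TTheory GRing.Theory Num.Theory.
Local Open Scope ring_scope.

Section Basics.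
Variable n : nat.
Local Notation MP := {mpoly CC[n]}.

Definition lf (c : 'rV[CC]_n) : MP := \sum_i c 0 i *: 'X_i.

Lemma lfD c c' : lf (c + c') = lf c + lf c'.
Proof. by rewrite /lf -big_split; apply: eq_bigr => i _; rewrite mxE scalerDl. Qed.

Lemma lfZ x c : lf (x *: c) = x *: lf c.
Proof. by rewrite /lf scaler_sumr; apply: eq_bigr => i _; rewrite mxE scalerA. Qed.

Lemma lf0 : lf 0 = 0.
Proof. by rewrite /lf big1 // => i _; rewrite mxE scale0r. Qed.

Lemma lfN c : lf (- c) = - lf c.
Proof. by rewrite -scaleN1r lfZ scaleN1r. Qed.

Lemma lfB c c' : lf (c - c') = lf c - lf c'.
Proof. by rewrite lfD lfN. Qed.

Lemma Xhomog i : ('X_i : MP) \is 1.-homog.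
Proof. by rewrite dhomogX /= mdeg1. Qed.

Lemma lf_homog c : lf c \is 1.-homog.
Proof. by apply: rpred_sum => i _; apply: rpredZ; apply: Xhomog. Qed.

Lemma meval_lf v c : (lf c).@[v] = \sum_i c 0 i * v i.
Proof. by rewrite raddf_sum; apply: eq_bigr => i _ /=; rewrite mevalZ mevalXU. Qed.

Lemma lf_eq0 c : lf c = 0 -> c = 0.
Proof.
move=> H; apply/rowP => i; have := congr1 (meval (fun k => (k == i)%:R)) H.
rewrite meval_lf meval0 (bigD1 i) //= big1 ?eqxx ?mulr1 ?addr0 ?mxE //.
by move=> j /negbTE ->; rewrite mulr0.
Qed.

Lemma lf_delta i : lf (delta_mx 0 i) = 'X_i.
Proof.
rewrite /lf (bigD1 i) //= big1 ?addr0 ?mxE ?eqxx ?scale1r //.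
by move=> j /negbTE; rewrite mxE eq_sym => ->; rewrite andbF scale0r.
Qed.

Lemma pihomogM d e (q f : MP) : f \is e.-homog ->
  pihomog (@mdeg n) (d + e) (q * f) = pihomog (@mdeg n) d q * f.
Proof.
move=> hf.
have hq := pihomog_partitionE (mf := mdeg) (leq_maxl (msize q) d.+1).
rewrite {1}hq big_distrl /= raddf_sum /= (bigD1 (Ordinal (leq_maxr (msize q) d.+1))) //=.
rewrite pihomog_dE; last by apply: dhomogM => //; apply: pihomogP.
rewrite big1 ?addr0 // => k hk.
apply: pihomog_ne0 (dhomogM (pihomogP mdeg k q) hf).
apply: contra hk => /eqP h; apply/eqP/val_inj => /=.
by move: h => /eqP; rewrite eqn_add2r => /eqP.
Qed.

Lemma mdeg1_U (m : 'X_{1..n}) : mdeg m = 1%N -> exists i, m = U_(i)%MM.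
Proof.
move=> h.
have : exists i, (0 < m i)%N.
  apply/existsP; apply: contraT; rewrite negb_exists => /forallP H.
  move: h; rewrite mdegE big1 // => i _; by move: (H i); rewrite lt0n negbK => /eqP.
case=> i hi; exists i; apply/mnmP => j; rewrite mnm1E.
move: h; rewrite mdegE (bigD1 i) //=.
case: (eqVneq i j) => [<-|nij] /=.
  by move=> e; apply/eqP; rewrite eqn_leq hi andbT -e leq_addr.
move=> e; have : (m j <= \sum_(k | k != i) m k)%N.
  by rewrite (bigD1 j) 1?eq_sym //= leq_addr.
move: hi; rewrite lt0n; case: (m i) e => [//|k] /=.
by rewrite addSn => [[/eqP]]; rewrite addn_eq0 => /andP[_ /eqP ->]; rewrite leqn0 => _ /eqP.
Qed.

Lemma homog1_lf p : p \is 1.-homog -> p = lf (\row_i p@_U_(i)).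
Proof.
move=> hp; apply/mpolyP => m.
rewrite /lf raddf_sum /=.
case: (boolP (mdeg m == 1%N)) => [/eqP/mdeg1_U [i ->] | nm].
  rewrite (bigD1 i) //= big1.
    by rewrite mcoeffZ mcoeffXU eqxx mulr1 mxE addr0.
  by move=> j nj /=; rewrite mcoeffZ mcoeffXU (negbTE nj) mulr0.
rewrite (dhomog_nemf_coeff hp nm) big1 // => j _ /=.
rewrite mcoeffZ mcoeffX; case: eqP => [e|]; last by rewrite mulr0.
by move: nm; rewrite -e mdeg1.
Qed.


Definition indep2 (c c' : 'rV[CC]_n) :=
  forall x y : CC, x *: c + y *: c' = 0 -> x = 0 /\ y = 0.

Lemma indep2_c0 c c' : indep2 c c' -> c != 0.
Proof.
move=> h; apply/eqP => c0; have := h 1 0; rewrite c0 scaler0 scale0r addr0.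
by case=> // /eqP; rewrite oner_eq0.
Qed.

Lemma indep2_sym c c' : indep2 c c' -> indep2 c' c.
Proof. by move=> h x y e; have [] := h y x; rewrite // addrC. Qed.

Lemma comp_sub_ideal (lq : n.-tuple MP) (l : MP) :
  (forall k, exists r, 'X_k - ('X_k \mPo lq) = l * r) ->
  forall p, exists r, p - (p \mPo lq) = l * r.
Proof.
move=> SX0.
have SM : forall p1 p2, (exists r, p1 - (p1 \mPo lq) = l * r) ->
    (exists r, p2 - (p2 \mPo lq) = l * r) -> exists r, p1 * p2 - (p1 * p2 \mPo lq) = l * r.
  move=> p1 p2 [r1 e1] [r2 e2]; exists (r1 * p2 + (p1 \mPo lq) * r2).
  rewrite rmorphM /=.
  have -> : p1 * p2 - (p1 \mPo lq) * (p2 \mPo lq) =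
     (p1 - (p1 \mPo lq)) * p2 + (p1 \mPo lq) * (p2 - (p2 \mPo lq)).
    by rewrite mulrBl mulrBr addrA subrK.
  by rewrite e1 e2 mulrDr -mulrA; congr (_ + _); rewrite mulrCA.
have S1 : exists r, 1 - (1 \mPo lq) = l * r by exists 0; rewrite rmorph1 subrr mulr0.
have SX : forall m, exists r, 'X_[m] - ('X_[m] \mPo lq) = l * r.
  move=> m; rewrite mpolyXE_id; apply: (big_ind (fun x => exists r, x - (x \mPo lq) = l * r)) => [|x y|i _]; [exact: S1|exact: SM|].
  elim: (m i) => [|k IH]; first by rewrite expr0; exact: S1.
  by rewrite exprS; apply: SM; [exact: SX0|exact: IH].
move=> p0; rewrite [p0]mpolyE; apply: (big_ind (fun x => exists r, x - (x \mPo lq) = l * r)).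
- by exists 0; rewrite raddf0 subrr mulr0.
- move=> x y [r1 e1] [r2 e2]; exists (r1 + r2).
  by rewrite raddfD /= opprD addrACA e1 e2 mulrDr.
- move=> m _; have [r er] := SX m; exists (p0@_m *: r).
  by rewrite linearZ /= -scalerBr er scalerAr.
Qed.

Lemma lf_div c c' (p q : MP) : indep2 c c' -> lf c * q = lf c' * p ->
  exists r, p = lf c * r.
Proof.
move=> hi e.
have [j hj] : exists j, c 0 j != 0.
  apply/existsP; apply: contraT; rewrite negb_exists => /forallP H.
  suff : c = 0 by move/eqP; rewrite (negbTE (indep2_c0 hi)).
  by apply/rowP => k; rewrite mxE; move: (H k); rewrite negbK => /eqP.
pose lq := [tuple ('X_k - ((k == j)%:R / c 0 j) *: lf c) | k < n] : n.-tuple MP.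
have phiX k : 'X_k \mPo lq = 'X_k - ((k == j)%:R / c 0 j) *: lf c.
  by rewrite comp_mpolyXU -tnth_nth tnth_mktuple.
have phi_lf c'' : lf c'' \mPo lq = lf c'' - (c'' 0 j / c 0 j) *: lf c.
  have -> : lf c'' \mPo lq = \sum_k (c'' 0 k *: 'X_k - (c'' 0 k * ((k == j)%:R / c 0 j)) *: lf c).
    have -> : lf c'' = \sum_k c'' 0 k *: 'X_k by [].
    rewrite raddf_sum; apply: eq_bigr => k _ /=.
    by rewrite linearZ /= phiX scalerBr scalerA.
  rewrite sumrB -/(lf c'') -scaler_suml (bigD1 j) //= big1 ?addr0.
    by rewrite eqxx mul1r.
  by move=> k /negbTE ->; rewrite mul0r mulr0.
have S := @comp_sub_ideal lq (lf c).
have phic : lf c \mPo lq = 0 by rewrite phi_lf divff // scale1r subrr.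
have : (lf c' \mPo lq) * (p \mPo lq) = 0.
  by rewrite -rmorphM -e rmorphM /= phic mul0r.
move/eqP; rewrite mulf_eq0 => /orP [/eqP h | /eqP h].
  exfalso; move: h; rewrite phi_lf -lfZ -lfB => /lf_eq0 h.
  have := hi (- (c' 0 j / c 0 j)) 1; rewrite scale1r scaleNr addrC h.
  by case=> // _ /eqP; rewrite oner_eq0.
have [k|r er] := S _ p; last by exists r; rewrite -er h subr0.
exists ((k == j)%:R / c 0 j)%:MP; rewrite phiX opprB addrC subrK.
by rewrite -mul_mpolyC [RHS]mulrC.
Qed.

Lemma msize_lf c : c != 0 -> msize (lf c) = 2.
Proof.
move=> hc; have hl : lf c != 0 by apply: contra hc => /eqP /lf_eq0 ->.
have := dhomog_msize (lf_homog c); move/(dhomog_uniq hl (lf_homog c)).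
by case: (mmeasure _ (lf c)) => [|k] /= e //; rewrite -e.
Qed.

Lemma lf_mul_const c c' (r : MP) : c != 0 -> lf c' = lf c * r ->
  exists t, lf c' = t *: lf c.
Proof.
move=> hc e.
have [->|hc'] := eqVneq c' 0; first by exists 0; rewrite scale0r lf0.
have [r0|rn0] := eqVneq r 0; first by exists 0; rewrite e r0 mulr0 scale0r.
have hl : lf c != 0 by apply: contra hc => /eqP /lf_eq0 ->.
have := congr1 (fun p => msize p) e; rewrite msizeM // !msize_lf // => h.
have : (msize r <= 1)%N by move: h; case: (msize r) => [|[|k]].
move/msize1_polyC => er; exists r@_0; by rewrite e {1}er -mul_mpolyC [RHS]mulrC.
Qed.

Lemma X_ne0 (i : 'I_n) : ('X_i : MP) != 0.
Proof.
apply/eqP; rewrite -lf_delta => /lf_eq0 /rowP /(_ i).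
by rewrite !mxE !eqxx /= => /eqP; rewrite oner_eq0.
Qed.

Lemma from_config m P (f : 'I_P -> MP) g (i : 'I_n) : good_config m f g ->
  exists a : 'I_P -> 'rV[CC]_n, 'X_i * g = \sum_j lf (a j) * f j.
Proof.
case=> hf hg _ hI.
have hX : 'X_i * g \is (1 + m).-homog := dhomogM (Xhomog i) hg.
have [] := hI ('X_i * g).
  split; first exact: hX.
  by exists (fun _ => 'X_i); rewrite big_ord1.
move=> _ [q e].
exists (fun j => \row_k (pihomog mdeg 1 (q j))@_U_(k)).
rewrite -(pihomog_dE hX) e raddf_sum /=; apply: eq_bigr => j _.
by rewrite pihomogM // -homog1_lf //; apply: pihomogP.
Qed.

Lemma indep_g_ne0 P (f : 'I_P -> MP) g : lin_indep_fg f g -> g != 0.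
Proof.
move=> h; apply/eqP => g0.
have e : \sum_(j < P) (fun _ => 0 : CC) j *: f j + 1 *: g = 0.
  by rewrite big1 ?add0r ?g0 ?scaler0 // => j _; rewrite scale0r.
by have [_ /eqP] := h _ _ e; rewrite oner_eq0.
Qed.

Lemma indep_f_ne0 P (f : 'I_P -> MP) g j : lin_indep_fg f g -> f j != 0.
Proof.
move=> h; apply/eqP => f0.
have e : \sum_(k < P) (fun k => (k == j)%:R : CC) k *: f k + 0 *: g = 0.
  rewrite scale0r addr0 big1 // => k _.
  by case: eqP => [->|]; rewrite ?f0 ?scaler0 ?scale0r.
have [H _] := h _ _ e.
by move: (H j); rewrite eqxx => /eqP; rewrite oner_eq0.
Qed.

Lemma lf_sum_row (c : 'rV[CC]_n) (M : 'M[CC]_n) :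
  lf (c *m M) = \sum_i c 0 i *: lf (row i M).
Proof.
rewrite mulmx_sum_row (big_morph lf lfD lf0); apply: eq_bigr => i _.
by rewrite lfZ.
Qed.

Lemma lf_inj c c' : lf c = lf c' -> c = c'.
Proof. by move=> e; apply/eqP; rewrite -subr_eq0; apply/eqP/lf_eq0; rewrite lfB e subrr. Qed.

Lemma caseP0 m (f : 'I_0 -> MP) g : (0 < n)%N -> good_config m f g -> False.
Proof.
move=> hn hc; have [a e] := from_config (Ordinal hn) hc.
rewrite big_ord0 in e; case: hc => _ _ hli _.
move/eqP: e; rewrite mulf_eq0 (negbTE (X_ne0 _)) /=.
by rewrite (negbTE (indep_g_ne0 hli)).
Qed.

Lemma delta_ne0 (i : 'I_n) : delta_mx 0 i != 0 :> 'rV[CC]_n.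
Proof.
apply/eqP => /rowP /(_ i); rewrite !mxE !eqxx /= => /eqP.
by rewrite oner_eq0.
Qed.

Lemma caseP1 m (f : 'I_1 -> MP) g : (1 < n)%N -> good_config m f g -> False.
Proof.
move=> hn hc; have hn0 : (0 < n)%N := ltnW hn.
pose i0 := Ordinal hn0; pose i1 := Ordinal hn.
have [a0 e0] := from_config i0 hc; have [a1 e1] := from_config i1 hc.
rewrite big_ord1 in e0; rewrite big_ord1 in e1.
case: hc => _ _ hli _.
have f0 := indep_f_ne0 ord0 hli.
have key : lf (delta_mx 0 i0) * lf (a1 ord0) = lf (delta_mx 0 i1) * lf (a0 ord0).
  apply: (mulIf f0); rewrite !lf_delta -!mulrA -e0 -e1.
  by rewrite mulrCA.
have hi : indep2 (delta_mx 0 i0) (delta_mx 0 i1).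
  move=> x y /rowP h; have := h i0; have := h i1; rewrite !mxE !eqxx /=.
  by rewrite /= !mulr0 !mulr1 add0r addr0 => -> ->.
have [r er] := lf_div hi key.
have [t et] := lf_mul_const (delta_ne0 i0) er.
have eg : g = t *: f ord0.
  apply: (mulfI (X_ne0 i0)); rewrite e0 et lf_delta.
  by rewrite -scalerAl scalerAr.
have e : \sum_(j < 1) (fun _ => t) j *: f j + (-1) *: g = 0.
  by rewrite big_ord1 eg scaleN1r subrr.
by have [_ /eqP] := hli _ _ e; rewrite oppr_eq0 oner_eq0.
Qed.

End Basics.

From Stdlib Require Import Classical_Prop.

Lemma eigen_exists (M : 'M[CC]_3) :
  exists c : 'rV[CC]_3, exists a : CC, c != 0 /\ c *m M = a *: c.
Proof.
have : size (char_poly M) != 1%N by rewrite size_char_poly.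
case/closed_rootP => a ha; rewrite -eigenvalue_root_char in ha.
by case/eigenvalueP: ha => c hc hc0; exists c, a.
Qed.

Lemma sum2 (V : nmodType) (F : 'I_2 -> V) : \sum_(j < 2) F j = F ord0 + F ord_max.
Proof.
rewrite big_ord_recr big_ord1 /=; congr (F _ + _); exact: val_inj.
Qed.

Lemma onesided n (c0 L : 'rV[CC]_n) (G F : {mpoly CC[n]}) : c0 != 0 ->
  lf c0 * G = lf L * F -> (forall l0 l1 : CC, l0 *: G + l1 *: F = 0 -> l0 = 0) ->
  indep2 c0 L.
Proof.
move=> hc0 e hGF x y exy.
have [y0|yn0] := eqVneq y 0.
  move: exy; rewrite y0 scale0r addr0 => /eqP; rewrite scaler_eq0 (negbTE hc0) orbF.
  by move/eqP.
exfalso.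
have eyL : y *: L = - (x *: c0) by apply/eqP; rewrite -addr_eq0 addrC exy.
have eL : L = (- (x / y)) *: c0.
  by rewrite -(scalerK yn0 L) eyL scalerN scalerA -scaleNr mulrC.
have hl : lf c0 != 0 by apply: contra hc0 => /eqP /lf_eq0 ->.
have eG : G = (- (x / y)) *: F.
  by apply: (mulfI hl); rewrite e eL lfZ -scalerAl scalerAr.
have := hGF 1 (x / y); rewrite eG scale1r scaleNr addNr => /(_ erefl) /eqP.
by rewrite oner_eq0.
Qed.

Lemma caseP2 m (f : 'I_2 -> {mpoly CC[3]}) g : good_config m f g -> False.
Proof.
move=> hc.
have [a ea] : exists a : 'I_3 -> 'I_2 -> 'rV[CC]_3,
    forall i, 'X_i * g = \sum_j lf (a i j) * f j.
  apply: (@fin_all_exists _ (fun _ => 'I_2 -> 'rV[CC]_3)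
    (fun i (a : 'I_2 -> 'rV[CC]_3) => 'X_i * g = \sum_j lf (a j) * f j)) => i.
  exact: (from_config i hc).
case: hc => hf hg hli _.
set f1 := f ord0; set f2 := f ord_max.
have e2 i : 'X_i * g = lf (a i ord0) * f1 + lf (a i ord_max) * f2.
  by rewrite ea sum2.
pose A := \matrix_(i, k) a i ord0 0 k.
pose B := \matrix_(i, k) a i ord_max 0 k.
have rowA i : row i A = a i ord0 by apply/rowP => k; rewrite !mxE.
have rowB i : row i B = a i ord_max by apply/rowP => k; rewrite !mxE.
have Hc : forall c : 'rV_3, lf c * g = lf (c *m A) * f1 + lf (c *m B) * f2.
  move=> c; rewrite !lf_sum_row.
  have -> : lf c * g = \sum_i c 0 i *: ('X_i * g).
    by rewrite /lf mulr_suml; apply: eq_bigr => i _; rewrite scalerAl.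
  rewrite !mulr_suml -big_split /=; apply: eq_bigr => i _.
  by rewrite e2 rowA rowB scalerDr -!scalerAl.
have [c [al [hc ec]]] := eigen_exists A.
have [d [be [hd ed]]] := eigen_exists B.
pose g0 := g - al *: f1 - be *: f2.
pose Lc := c *m B - be *: c.
pose Ld := d *m A - al *: d.
have E1 : lf c * g0 = lf Lc * f2.
  rewrite /g0 /Lc lfB lfZ !mulrBr Hc ec lfZ -!mul_mpolyC; ring.
have E2 : lf d * g0 = lf Ld * f1.
  rewrite /g0 /Ld lfB lfZ !mulrBr Hc ed lfZ -!mul_mpolyC; ring.
have hind : forall l0 l1 l2 : CC, l0 *: g0 + l1 *: f1 + l2 *: f2 = 0 ->
    [/\ l0 = 0, l1 = 0 & l2 = 0].
  move=> l0 l1 l2 e.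
  pose cc := fun j : 'I_2 => if j == ord0 then l1 - l0 * al else l2 - l0 * be.
  have e' : \sum_(j < 2) cc j *: f j + l0 *: g = 0.
    rewrite sum2 /cc /= -/f1 -/f2 -e /g0.
    rewrite !scalerBl !scalerBr !scalerA; rewrite -!mul_mpolyC; ring.
  have [hcc hl0] := hli _ _ e'.
  have := hcc ord0; have := hcc ord_max; rewrite /cc /=.
  by rewrite hl0 !mul0r !subr0 => -> ->.
have g0n : g0 != 0.
  apply/eqP => e; have := hind 1 0 0; rewrite e scaler0 !scale0r !addr0.
  by case=> // /eqP; rewrite oner_eq0.
have f1n : f1 != 0 := indep_f_ne0 ord0 hli.
have f2n : f2 != 0 := indep_f_ne0 ord_max hli.
have hic : indep2 c Lc.
  apply: (onesided hc E1) => l0 l1 e.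
  by have [] := hind l0 0 l1; rewrite // scale0r addr0.
have hid : indep2 d Ld.
  apply: (onesided hd E2) => l0 l1 e.
  by have [] := hind l0 l1 0; rewrite // scale0r addr0.
have lcn : lf c != 0 by apply: contra hc => /eqP /lf_eq0 ->.
have ldn : lf d != 0 by apply: contra hd => /eqP /lf_eq0 ->.
have Lcn : Lc != 0 := indep2_c0 (indep2_sym hic).
have Ldn : Ld != 0 := indep2_c0 (indep2_sym hid).
have lLcn : lf Lc != 0 by apply: contra Lcn => /eqP /lf_eq0 ->.
have lLdn : lf Ld != 0 by apply: contra Ldn => /eqP /lf_eq0 ->.
have [h eh] := lf_div hic E1.
have gh : g0 = lf Lc * h.
  by apply: (mulfI lcn); rewrite E1 eh mulrCA.
have [k ek] := lf_div hid E2.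
have gk : g0 = lf Ld * k.
  by apply: (mulfI ldn); rewrite E2 ek mulrCA.
have hLL : lf Ld * k = lf Lc * h by rewrite -gk -gh.
have ei : forall i, 'X_i * g0 = lf (a i ord0 - al *: delta_mx 0 i) * f1
                              + lf (a i ord_max - be *: delta_mx 0 i) * f2.
  move=> i; rewrite /g0 !mulrBr e2 !lfB !lfZ !lf_delta -!mul_mpolyC; ring.
case: (classic (indep2 Ld Lc)) => [hLi|nLi].
  have [r er] := lf_div hLi hLL.
  have kr : k = lf Lc * r by apply: (mulfI lLdn); rewrite hLL er mulrCA.
  have rn0 : r != 0 by apply: contra g0n => /eqP r0; rewrite gh er r0 !mulr0.
  have hvt : forall i, exists p : CC * CC, delta_mx 0 i = p.1 *: d + p.2 *: c.
    move=> i.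
    set a' := a i ord0 - al *: delta_mx 0 i.
    set b' := a i ord_max - be *: delta_mx 0 i.
    have star : 'X_i * lf Lc * lf Ld = lf a' * lf d * lf Lc + lf b' * lf c * lf Ld.
      apply: (mulIf rn0).
      transitivity ('X_i * g0); first by rewrite gh er; ring.
      by rewrite ei ek kr eh er; ring.
    have s1 : lf Lc * ('X_i * lf Ld - lf a' * lf d) = lf Ld * (lf b' * lf c).
      transitivity ('X_i * lf Lc * lf Ld - lf a' * lf d * lf Lc); first by ring.
      by rewrite star; ring.
    have [s es] := lf_div (indep2_sym hLi) s1.
    have [u eu] := lf_div (indep2_sym hic) (esym (etrans (mulrC _ _) es)).
    have [t et] := lf_mul_const Lcn eu.
    have s2 : lf Ld * ('X_i * lf Lc - lf b' * lf c) = lf Lc * (lf a' * lf d).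
      transitivity ('X_i * lf Lc * lf Ld - lf b' * lf c * lf Ld); first by ring.
      by rewrite star; ring.
    have [s' es'] := lf_div hLi s2.
    have [u' eu'] := lf_div (indep2_sym hid) (esym (etrans (mulrC _ _) es')).
    have [v ev] := lf_mul_const Ldn eu'.
    exists (v, t); apply: lf_inj; rewrite /= lf_delta lfD !lfZ.
    apply: (mulIf (mulf_neq0 lLcn lLdn)); rewrite mulrA star ev et.
    rewrite -!mul_mpolyC; ring.
  have [vt hvt'] := fin_all_exists hvt.
  have eM : (1%:M : 'M[CC]_3) = (\col_i (vt i).1) *m d + (\col_i (vt i).2) *m c.
    apply/matrixP => i j; rewrite !mxE !big_ord1 !mxE.
    have := congr1 (fun M : 'rV[CC]_3 => M 0 j) (hvt' i); rewrite /= !mxE /=.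
    by rewrite eq_sym => ->.
  have := mxrank1 CC 3; rewrite eM => r3.
  have := mxrank_add ((\col_i (vt i).1) *m d) ((\col_i (vt i).2) *m c).
  rewrite r3.
  have h1 := mxrankM_maxr (\col_i (vt i).1) d.
  have h2 := mxrankM_maxr (\col_i (vt i).2) c.
  have h3 := rank_leq_row d.
  have h4 := rank_leq_row c.
  move=> h5.
  have : (3 <= 1 + 1)%N.
    apply: (leq_trans h5); apply: leq_add.
      exact: leq_trans h1 h3.
    exact: leq_trans h2 h4.
  by [].
apply: nLi => x y exy.
case: (classic (x = 0 /\ y = 0)) => // Hxy; exfalso.
have yn0 : y != 0.
  apply/eqP => y0; apply: Hxy; split => //.
  move: exy; rewrite y0 scale0r addr0 => /eqP; rewrite scaler_eq0 (negbTE Ldn) orbF.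
  by move/eqP.
pose ka := - (x / y).
have eLc : Lc = ka *: Ld.
  have eyL : y *: Lc = - (x *: Ld) by apply/eqP; rewrite -addr_eq0 addrC exy.
  by rewrite -(scalerK yn0 Lc) eyL scalerN scalerA -scaleNr mulrC.
have hk : k = ka *: h.
  by apply: (mulfI lLdn); rewrite hLL eLc lfZ -scalerAl scalerAr.
have hn0 : h != 0 by apply: contra f2n => /eqP h0; rewrite eh h0 mulr0.
have ei2 : forall i, 'X_i * lf (ka *: Ld) =
    lf (a i ord0 - al *: delta_mx 0 i) * lf (ka *: d)
    + lf (a i ord_max - be *: delta_mx 0 i) * lf c.
  move=> i; apply: (mulIf hn0).
  transitivity ('X_i * g0); first by rewrite gh eLc !lfZ -!mul_mpolyC; ring.
  by rewrite ei ek hk eh !lfZ -!mul_mpolyC; ring.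
pose w := fun j : 'I_3 => if (j : nat) == 0%N then ka *: Ld
                          else if (j : nat) == 1%N then ka *: d else c.
pose W := \matrix_(j, l) w j 0 l.
have rowW j : row j W = w j by apply/rowP => l; rewrite !mxE.
have Wu : W \in unitmx.
  rewrite unitmxE unitfE; apply/negP => /det0P [lam lamn0 elam].
  have : lf (lam *m W) = 0 by rewrite elam lf0.
  rewrite lf_sum_row !big_ord_recl big_ord0 addr0 !rowW /w /= => e.
  have e' : lam 0 0 *: g0 + lam 0 1 *: f1 + lam 0 2 *: f2 = 0.
    rewrite gh eLc ek hk eh -(mulr0 h) -e !lfZ -!mul_mpolyC.
    have -> : lift ord0 (lift ord0 ord0) = 2 :> 'I_3 by apply: val_inj.
    have -> : lift ord0 ord0 = 1 :> 'I_3 by apply: val_inj.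
    have -> : ord0 = 0 :> 'I_3 by apply: val_inj.
    ring.
  have [l0 l1 l2] := hind _ _ _ e'.
  apply/negP: lamn0; rewrite negbK; apply/eqP/rowP => j; rewrite mxE.
  case: j => [[|[|[|j']]] hj] //.
  - by rewrite (_ : Ordinal hj = 0) //; apply: val_inj.
  - by rewrite (_ : Ordinal hj = 1) //; apply: val_inj.
  - by rewrite (_ : Ordinal hj = 2) //; apply: val_inj.
pose p := invmx W *m (delta_mx 0 0 : 'cV[CC]_3).
have hp : W *m p = delta_mx 0 0 by rewrite mulmxA mulmxV // mul1mx.
pose v := fun l : 'I_3 => p l 0.
have evw : forall j, (lf (w j)).@[v] = (j == 0)%:R.
  move=> j; rewrite meval_lf.
  have := congr1 (fun M : 'cV[CC]_3 => M j 0) hp; rewrite !mxE /= andbT => <-.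
  by apply: eq_bigr => l _; rewrite mxE.
have e0 : (lf (ka *: Ld)).@[v] = 1 by move: (evw 0); rewrite eqxx.
have e1 : (lf (ka *: d)).@[v] = 0 by move: (evw 1).
have e2' : (lf c).@[v] = 0 by move: (evw 2).
have v0 : forall i, v i = 0.
  move=> i; have := congr1 (meval v) (ei2 i).
  by rewrite rmorphM rmorphD !rmorphM /= mevalXU e0 e1 e2' !mulr0 mulr1 addr0.
move: (evw 0); rewrite eqxx meval_lf big1 => [/eqP|l _]; last by rewrite v0 mulr0.
by rewrite eq_sym oner_eq0.
Qed.

Section Ideal.
Variables (n P : nat) (f : 'I_P -> {mpoly CC[n]}).

Lemma in_ideal0 : in_ideal f 0.
Proof. by exists (fun _ => 0); rewrite big1 // => j _; rewrite mul0r. Qed.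

Lemma in_idealD p q : in_ideal f p -> in_ideal f q -> in_ideal f (p + q).
Proof.
move=> [a ->] [b ->]; exists (fun j => a j + b j).
by rewrite -big_split; apply: eq_bigr => j _; rewrite mulrDl.
Qed.

Lemma in_idealM r p : in_ideal f p -> in_ideal f (r * p).
Proof.
move=> [a ->]; exists (fun j => r * a j).
by rewrite mulr_sumr; apply: eq_bigr => j _; rewrite mulrA.
Qed.

Lemma in_idealN p : in_ideal f p -> in_ideal f (- p).
Proof. by move=> h; rewrite -mulN1r; apply: in_idealM. Qed.

Lemma in_ideal_gen r j : in_ideal f (r * f j).
Proof.
exists (fun i => if i == j then r else 0).
rewrite (bigD1 j) //= eqxx big1 ?addr0 // => i /negbTE ->; by rewrite mul0r.
Qed.

Lemma in_ideal_sum (I : finType) (F : I -> {mpoly CC[n]}) :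
  (forall i, in_ideal f (F i)) -> in_ideal f (\sum_i F i).
Proof.
move=> h; elim/big_rec: _ => [|i x _ hx]; first exact: in_ideal0.
exact: in_idealD.
Qed.

End Ideal.

Section Example.
Variable k : nat.
Local Notation N := (k.+4).
Local Notation MPN := {mpoly CC[N]}.

Definition x0 : 'I_N := ord0.
Definition x1 : 'I_N := lift ord0 ord0.
Definition wj (j : 'I_k.+3) : 'I_N := widen_ord (leqnSn _) j.
Definition lj (j : 'I_k.+3) : 'I_N := lift ord0 j.

Definition fex (j : 'I_k.+3) : MPN :=
  if (j : nat) == 0%N then 'X_x0 * 'X_x0
  else if (j : nat) == 1%N then 'X_x1 * 'X_x1
  else 'X_x0 * 'X_(wj j) + 'X_x1 * 'X_(lj j).

Definition gex : MPN := 'X_x0 * 'X_x1.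

Lemma fex_homog j : fex j \is 2.-homog.
Proof.
rewrite /fex; case: ifP => _; first exact: (dhomogM (Xhomog _) (Xhomog _)).
case: ifP => _; first exact: (dhomogM (Xhomog _) (Xhomog _)).
by apply: rpredD; exact: (dhomogM (Xhomog _) (Xhomog _)).
Qed.

Lemma gex_homog : gex \is 2.-homog.
Proof. exact: (dhomogM (Xhomog _) (Xhomog _)). Qed.

Lemma Xg_in (t : 'I_N) : in_ideal fex ('X_t * gex).
Proof.
case: t => [[|[|t]] ht].
- have -> : Ordinal ht = x0 by apply: val_inj.
  pose j0 : 'I_k.+3 := ord0.
  have -> : 'X_x0 * gex = 'X_x1 * fex j0 by rewrite /gex /fex /=; ring.
  exact: in_ideal_gen.
- have -> : Ordinal ht = x1 by apply: val_inj.
  pose j1 : 'I_k.+3 := Ordinal (isT : (1 < k.+3)%N).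
  have -> : 'X_x1 * gex = 'X_x0 * fex j1 by rewrite /gex /fex /=; ring.
  exact: in_ideal_gen.
have [ht'|ht'] := ltnP t.+2 k.+3.
  pose j : 'I_k.+3 := Ordinal ht'.
  pose j1 : 'I_k.+3 := Ordinal (isT : (1 < k.+3)%N).
  have -> : Ordinal ht = wj j by apply: val_inj.
  have -> : 'X_(wj j) * gex = 'X_x1 * fex j - 'X_(lj j) * fex j1.
    by rewrite /gex /fex /=; ring.
  by apply: in_idealD; [exact: in_ideal_gen | apply: in_idealN; exact: in_ideal_gen].
have et : t = k.+1 by apply/eqP; rewrite -2!eqSS eqn_leq -ltnS ht ht'.
pose j : 'I_k.+3 := Ordinal (ltnSn k.+2).
pose j0 : 'I_k.+3 := ord0.
have -> : Ordinal ht = lj j by apply: val_inj; rewrite /= et.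
have -> : 'X_(lj j) * gex = 'X_x0 * fex j - 'X_(wj j) * fex j0.
  by rewrite /gex /fex /=; ring.
by apply: in_idealD; [exact: in_ideal_gen | apply: in_idealN; exact: in_ideal_gen].
Qed.

Definition pt (a b : nat) : 'I_N -> CC := fun i => (((i : nat) == a) || ((i : nat) == b))%:R.

Lemma ev_fex u j : (fex j).@[u] =
  if (j : nat) == 0%N then u x0 * u x0
  else if (j : nat) == 1%N then u x1 * u x1
  else u x0 * u (wj j) + u x1 * u (lj j).
Proof.
rewrite /fex; case: ifP => _; first by rewrite rmorphM /= !mevalXU.
case: ifP => _; first by rewrite rmorphM /= !mevalXU.
by rewrite rmorphD !rmorphM /= !mevalXU.
Qed.

Lemma lin_indep_ex : lin_indep_fg fex gex.
Proof.
move=> c c0 e.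
have EV : forall u, \sum_j c j * (fex j).@[u] + c0 * gex.@[u] = 0.
  move=> u; have := congr1 (meval u) e; rewrite rmorphD raddf_sum /= mevalZ rmorph0.
  move=> h; rewrite -[RHS]h; congr (_ + _); apply: eq_bigr => j _.
  by rewrite mevalZ.
have Hc0 : c ord0 = 0.
  have := EV (pt 0 0); rewrite (bigD1 ord0) //= big1 => [|j hj].
    by rewrite ev_fex /gex rmorphM /= !mevalXU /pt /= !mulr0 !mulr1 !addr0.
  rewrite ev_fex /pt /=.
  case: j hj => [[|[|jj]] hjj] hj /=.
  - by exfalso; move/eqP: hj; apply; apply: val_inj.
  - by rewrite !(mulr0, mul0r, mul1r, addr0).
  - by rewrite !(mulr0, mul0r, mul1r, addr0).
pose j1 : 'I_k.+3 := Ordinal (isT : (1 < k.+3)%N).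
have Hc1 : c j1 = 0.
  have := EV (pt 1 1); rewrite (bigD1 j1) //= big1 => [|j hj].
    by rewrite ev_fex /gex rmorphM /= !mevalXU /pt /= !(mulr0, mul0r, mulr1, addr0).
  rewrite ev_fex /pt /=.
  case: j hj => [[|[|jj]] hjj] hj /=.
  - by rewrite !(mulr0, mul0r, mul1r, addr0).
  - by exfalso; move/eqP: hj; apply; apply: val_inj.
  - by rewrite !(mulr0, mul0r, mul1r, addr0).
have Hcg : c0 = 0.
  have := EV (pt 0 1); rewrite big1 => [|j _].
    by rewrite add0r /gex rmorphM /= !mevalXU /pt /= !mulr1.
  rewrite ev_fex /pt /=.
  case: j => [[|[|jj]] hjj] /=.
  - by rewrite (_ : Ordinal hjj = ord0) ?Hc0 ?mul0r //; apply: val_inj.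
  - by rewrite (_ : Ordinal hjj = j1) ?Hc1 ?mul0r //; apply: val_inj.
  - by rewrite !(mulr0, mul0r, mul1r, addr0).
split => //.
case=> [[|[|jj]] hjj].
- by rewrite (_ : Ordinal hjj = ord0) //; apply: val_inj.
- by rewrite (_ : Ordinal hjj = j1) //; apply: val_inj.
have := EV (pt 0 jj.+2); rewrite (bigD1 (Ordinal hjj)) //= big1 => [|j hj].
  rewrite ev_fex /gex rmorphM /= !mevalXU /pt /= eqxx.
  by rewrite Hcg !(mulr0, mul0r, mulr1, addr0, orbT).
rewrite ev_fex /pt /=.
case: j hj => [[|[|jj']] hjj'] hj /=.
- by rewrite (_ : Ordinal hjj' = ord0) ?Hc0 ?mul0r //; apply: val_inj.
- by rewrite !(mulr0, mul0r, mul1r, addr0).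
- have : jj' != jj.
    by apply: contra hj => /eqP e'; apply/eqP/val_inj; rewrite /= e'.
  by move=> hne; rewrite !eqSS (negbTE hne) !(mulr0, mul0r, mul1r, addr0).
Qed.

Lemma incl_ex p : in_ideal_deg (fun _ : 'I_1 => gex) 3 p -> in_ideal_deg fex 3 p.
Proof.
case=> hp [q e]; split => //.
rewrite big_ord1 in e.
have -> : p = lf (\row_i (pihomog mdeg 1 (q ord0))@_U_(i)) * gex.
  rewrite -(pihomog_dE hp) e (pihomogM 1 (q ord0) gex_homog).
  by rewrite -homog1_lf //; apply: pihomogP.
rewrite /lf mulr_suml; apply: in_ideal_sum => i.
rewrite -scalerAl -mul_mpolyC; apply: in_idealM; exact: Xg_in.
Qed.

Lemma config_ex : good_config 2 fex gex.
Proof. split; [exact: fex_homog | exact: gex_homog | exact: lin_indep_ex | exact: incl_ex]. Qed.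

End Example.

Theorem theorem2 :
  (forall (n m P : nat) (f : 'I_P -> {mpoly CC[n]}) (g : {mpoly CC[n]}),
      (n <= 3)%N -> good_config m f g -> (n <= P)%N) /\
  (forall n : nat, (4 <= n)%N ->
      exists (m P : nat) (f : 'I_P -> {mpoly CC[n]}) (g : {mpoly CC[n]}),
        good_config m f g /\ (P < n)%N).
Proof.
split.
  move=> n m P f g hn hc; rewrite leqNgt; apply/negP => hP.
  case: P f hP hc => [|[|[|P]]] f hP hc.
  - exact: caseP0 hP hc.
  - exact: caseP1 hP hc.
  - have en : n = 3 by apply/eqP; rewrite eqn_leq hn hP.
    subst n; exact: caseP2 hc.
  - by move: (leq_trans hP hn).
move=> n hn.
have [k ->] : exists k, n = k.+4 by exists (n - 4)%N; rewrite -addn4 subnK.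
by exists 2, k.+3, (fex (k:=k)), (gex k); split; [exact: config_ex | ].
Qed.
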